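(* Let $\Delta$ be an irreducible reduced root system with positive roots $\Delta^+$ and simple roots $\Pi$, partially ordered by $\mu\preccurlyeq\nu$ iff $\nu-\mu$ is a non-negative integral linear combination of simple roots. 1) For any $\gamma\in\Delta^+$, the subposet $\{\nu\in\Delta^+\mid \nu\succcurlyeq\gamma\}$ is a modular lattice. 2) For $\gamma_1,\gamma_2\in\Delta^+$, the greatest lower bound $\gamma_1\wedge\gamma_2$ exists in $(\Delta^+,\preccurlyeq)$ if and only if $\mathrm{supp}(\gamma_1)\cap\mathrm{supp}(\gamma_2)\neq\varnothing$. In this case, writing $\gamma_i=\sum_{\alpha\in\Pi}c_{i\alpha}\alpha$, one has $\gamma_1\wedge\gamma_2=\sum_{\alpha\in\Pi}\min\{c_{1\alpha},c_{2\alpha}\}\alpha$.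
   Context: For $\mu=\sum_{\alpha\in\Pi}c_\alpha\alpha$, $\mathrm{supp}(\mu)=\{\alpha\in\Pi\mid c_\alpha\neq 0\}$. The greatest lower bound (meet) of $\gamma_1,\gamma_2$ is a positive root $\nu$ with $\nu\preccurlyeq\gamma_1,\gamma_2$ such that every positive root $\kappa$ with $\kappa\preccurlyeq\gamma_1,\gamma_2$ satisfies $\kappa\preccurlyeq\nu$. *)

(* Defs.v *)
From HB Require Import structures.
From mathcomp Require Import all_boot all_order all_algebra.
Set Implicit Arguments. Unset Strict Implicit. Unset Printing Implicit Defensive.
Import Order.TTheory GRing.Theory Num.Theory.
Local Open Scope ring_scope.

Section RootSystems.
Variables (R : realFieldType) (n : nat).
Local Notation V := 'rV[R]_n.

Definition dotp (u v : V) : R := \sum_(i < n) u 0 i * v 0 i.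

Definition cartan (b a : V) : R := 2 * dotp b a / dotp a a.

Definition refl (a b : V) : V := b - cartan b a *: a.

Definition reduced_root_system (Phi : seq V) : Prop :=
  [/\ 0 \notin Phi,
      (<<Phi>>%VS = fullv),
      (forall a b, a \in Phi -> b \in Phi -> refl a b \in Phi),
      (forall a b, a \in Phi -> b \in Phi -> exists z : int, cartan b a = z%:~R)
    & (forall a (c : R), a \in Phi -> c *: a \in Phi -> c = 1 \/ c = -1)].

Definition irreducible_rs (Phi : seq V) : Prop :=
  ~ exists P : pred V,
      [/\ exists2 a, a \in Phi & P a,
          exists2 b, b \in Phi & ~~ P b
        & forall a b, a \in Phi -> b \in Phi -> P a -> ~~ P b -> dotp a b = 0].

Definition irreducible_reduced_root_system (Phi : seq V) : Prop :=
  reduced_root_system Phi /\ irreducible_rs Phi.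

Definition is_base (Phi : seq V) (k : nat) (Pi : k.-tuple V) : Prop :=
  [/\ {subset Pi <= Phi}, free Pi &
      forall b, b \in Phi -> exists c : 'I_k -> nat,
        b = \sum_(i < k) (c i)%:R *: Pi`_i \/ b = - \sum_(i < k) (c i)%:R *: Pi`_i].

Definition rpreceq (k : nat) (Pi : k.-tuple V) (mu nu : V) : Prop :=
  exists c : 'I_k -> nat, nu - mu = \sum_(i < k) (c i)%:R *: Pi`_i.

Definition pos_root (Phi : seq V) (k : nat) (Pi : k.-tuple V) (b : V) : Prop :=
  b \in Phi /\ rpreceq Pi 0 b.

Definition rcoef (k : nat) (Pi : k.-tuple V) (mu : V) (i : 'I_k) : R := coord Pi i mu.

Definition rsupp (k : nat) (Pi : k.-tuple V) (mu : V) : {set 'I_k} :=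
  [set i | rcoef Pi mu i != 0].

End RootSystems.

Section Posets.
Variable T : Type.
Variables (S : T -> Prop) (le : T -> T -> Prop).

Definition is_meet (x y m : T) : Prop :=
  [/\ S m, le m x, le m y & forall z, S z -> le z x -> le z y -> le z m].

Definition is_join (x y j : T) : Prop :=
  [/\ S j, le x j, le y j & forall z, S z -> le x z -> le y z -> le j z].

Definition modular_lattice : Prop :=
  (forall x y, S x -> S y -> (exists m, is_meet x y m) /\ (exists j, is_join x y j)) /\
  (forall x y z m j1 j2 m2, S x -> S y -> S z -> le x z ->
     is_meet y z m -> is_join x m j1 -> is_join x y j2 -> is_meet j2 z m2 -> j1 = m2).

End Posets.

(* Main.v *)
Set Warnings "-notation-overridden,-ambiguous-paths,-notation-incompatible-prefix".
Require Import Defs.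
From HB Require Import structures.
From mathcomp Require Import all_boot all_order all_algebra.
From mathcomp Require Import ring lra zify.
Import Order.TTheory GRing.Theory Num.Theory.
Local Open Scope ring_scope.

Section Dot.
Variables (R : realFieldType) (n : nat).
Local Notation V := 'rV[R]_n.
Local Notation dot := (@dotp R n).

Lemma dotC (u v : V) : dot u v = dot v u.
Proof. by apply: eq_bigr => i _; rewrite mulrC. Qed.

Lemma dotDl (u w v : V) : dot (u + w) v = dot u v + dot w v.
Proof. by rewrite /dotp -big_split; apply: eq_bigr => i _; rewrite mxE mulrDl. Qed.

Lemma dotZl (c : R) (u v : V) : dot (c *: u) v = c * dot u v.
Proof. by rewrite /dotp mulr_sumr; apply: eq_bigr => i _; rewrite mxE mulrA. Qed.

Lemma dot0l (v : V) : dot 0 v = 0.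
Proof. by rewrite /dotp big1 // => i _; rewrite mxE mul0r. Qed.

Lemma dotNl (u v : V) : dot (- u) v = - dot u v.
Proof. by rewrite -scaleN1r dotZl mulN1r. Qed.

Lemma dotBl (u w v : V) : dot (u - w) v = dot u v - dot w v.
Proof. by rewrite dotDl dotNl. Qed.

Lemma dotDr (u w v : V) : dot v (u + w) = dot v u + dot v w.
Proof. by rewrite dotC dotDl !(dotC v). Qed.

Lemma dotZr (c : R) (u v : V) : dot v (c *: u) = c * dot v u.
Proof. by rewrite dotC dotZl dotC. Qed.

Lemma dotNr (u v : V) : dot v (- u) = - dot v u.
Proof. by rewrite dotC dotNl dotC. Qed.

Lemma dotBr (u w v : V) : dot v (u - w) = dot v u - dot v w.
Proof. by rewrite dotDr dotNr. Qed.

Lemma dot_suml (I : Type) (r : seq I) (P : pred I) (F : I -> V) (v : V) :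
  dot (\sum_(i <- r | P i) F i) v = \sum_(i <- r | P i) dot (F i) v.
Proof. exact: (big_morph (fun u => dot u v) (fun u w => dotDl u w v) (dot0l v)). Qed.

Lemma dot_sumr (I : Type) (r : seq I) (P : pred I) (F : I -> V) (v : V) :
  dot v (\sum_(i <- r | P i) F i) = \sum_(i <- r | P i) dot v (F i).
Proof. rewrite dotC dot_suml; apply: eq_bigr => i _; exact: dotC. Qed.

Lemma dot_ge0 (v : V) : 0 <= dot v v.
Proof. by apply: sumr_ge0 => i _; rewrite -expr2 sqr_ge0. Qed.

Lemma dot_eq0 (v : V) : dot v v = 0 -> v = 0.
Proof.
move=> h; have H0 : forall i : 'I_n, true -> 0 <= v 0 i * v 0 i.
  by move=> i _; rewrite -expr2 sqr_ge0.
have H := psumr_eq0P H0 h.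
apply/rowP => i; rewrite mxE.
by have /eqP := H i isT; rewrite mulf_eq0 orbb => /eqP.
Qed.

Lemma dot_gt0 (v : V) : v != 0 -> 0 < dot v v.
Proof.
move=> nz; rewrite lt_def dot_ge0 andbT; apply/eqP => /dot_eq0 h.
by rewrite h eqxx in nz.
Qed.

Lemma id4 (v d1 d2 : V) : dot (v + d1 + d2) (v + d1 + d2) =
  dot (v + d1) (v + d2) + dot (v + d1) d1 + dot (v + d2) d2 + dot d1 d2.
Proof. rewrite !(dotDl, dotDr) ?(dotC d1 v) ?(dotC d2 v) ?(dotC d2 d1); ring. Qed.

Lemma id_nu (v d1 d2 : V) : dot v v =
  dot (v + d1) (v + d2) - dot (v + d1) d2 - dot d1 (v + d2) + dot d1 d2.
Proof. rewrite !(dotDl, dotDr) ?(dotC d1 v) ?(dotC d2 v) ?(dotC d2 d1); ring. Qed.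

End Dot.
Arguments dotC {R n}. Arguments dotDl {R n}. Arguments dotZl {R n}. Arguments dot0l {R n}.
Arguments dotNl {R n}. Arguments dotBl {R n}. Arguments dotDr {R n}. Arguments dotZr {R n}.
Arguments dotNr {R n}. Arguments dotBr {R n}. Arguments dot_ge0 {R n}. Arguments dot_eq0 {R n v}. Arguments dot_gt0 {R n}.
Arguments dot_suml {R n I}. Arguments id4 {R n}. Arguments id_nu {R n}. Arguments dot_sumr {R n I}.

Lemma meet_uniq T (S : T -> Prop) (le : T -> T -> Prop) x y m m' :
  (forall u v, le u v -> le v u -> u = v) ->
  is_meet S le x y m -> is_meet S le x y m' -> m = m'.
Proof. by move=> A [s1 a1 b1 c1] [s2 a2 b2 c2]; apply: A; [apply: c2 | apply: c1]. Qed.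

Lemma join_uniq T (S : T -> Prop) (le : T -> T -> Prop) x y m m' :
  (forall u v, le u v -> le v u -> u = v) ->
  is_join S le x y m -> is_join S le x y m' -> m = m'.
Proof. by move=> A [s1 a1 b1 c1] [s2 a2 b2 c2]; apply: A; [apply: c1 | apply: c2]. Qed.
Arguments meet_uniq {T S le x y m m'}.
Arguments join_uniq {T S le x y m m'}.

Section Roots.
Variables (R : realFieldType) (n k : nat) (Phi : seq 'rV[R]_n) (Pi : k.-tuple 'rV[R]_n).
Hypothesis hPhi : reduced_root_system Phi.
Hypothesis hPi : is_base Phi Pi.
Local Notation V := 'rV[R]_n.
Local Notation dot := (@dotp R n).

Definition vec (c : 'I_k -> nat) : V := \sum_(i < k) (c i)%:R *: Pi`_i.

Lemma freePi : free Pi.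
Proof. by case: hPi. Qed.

Lemma coord_vec c i : coord Pi i (vec c) = (c i)%:R.
Proof. exact: coord_sum_free freePi. Qed.

Lemma coord_a (i j : 'I_k) : coord Pi j Pi`_i = (i == j)%:R.
Proof. exact: coord_free freePi. Qed.

Lemma vec_inj c d : vec c = vec d -> forall i, c i = d i.
Proof. by move=> h i; apply/eqP; rewrite -(eqr_nat R) -!coord_vec h. Qed.

Arguments vec_inj {c d}.

Lemma vec_ext c d : (forall i, c i = d i) -> vec c = vec d.
Proof. by move=> h; apply: eq_bigr => i _; rewrite h. Qed.

Lemma vec_add c d : vec (fun i => c i + d i)%N = vec c + vec d.
Proof. by rewrite /vec -big_split; apply: eq_bigr => i _; rewrite natrD scalerDl. Qed.

Lemma vec_delta (i : 'I_k) : vec (fun j => nat_of_bool (j == i)) = Pi`_i.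
Proof.
rewrite /vec (bigD1 i) //= eqxx scale1r big1 ?addr0 // => j /negPf ->.
by rewrite scale0r.
Qed.

Lemma vec_eq0 c : vec c = 0 -> forall i, c i = 0%N.
Proof. by move=> h i; apply/eqP; rewrite -(eqr_nat R) -coord_vec h linear0. Qed.

Arguments vec_eq0 {c}.

Lemma a_in (i : 'I_k) : Pi`_i \in Phi.
Proof. by case: hPi => sub _ _; apply: sub; apply: mem_nth; rewrite size_tuple. Qed.

Lemma root_nz b : b \in Phi -> b != 0.
Proof. by case: hPhi => n0 _ _ _ _ hb; apply/eqP => e; move: n0; rewrite -e hb. Qed.

Lemma root_sign b : b \in Phi -> exists c, b = vec c \/ b = - vec c.
Proof. by case: hPi => _ _ H /H. Qed.

Lemma negPhi b : b \in Phi -> - b \in Phi.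
Proof.
case: hPhi => _ _ Hrefl _ _ hb.
have := Hrefl b b hb hb; rewrite /refl /cartan -mulrA divff ?mulr1.
  by rewrite scaler_nat mulr2n opprD addrA subrr add0r.
by rewrite gt_eqF // dot_gt0 // root_nz.
Qed.

Lemma mixed b (i j : 'I_k) : b \in Phi -> 0 < coord Pi i b -> coord Pi j b < 0 -> False.
Proof.
move=> /root_sign [c [->|->]]; rewrite ?linearN /= !coord_vec.
  by move=> _; rewrite ltNge ler0n.
by rewrite oppr_gt0 ltNge ler0n.
Qed.


Lemma T1 a b : a \in Phi -> b \in Phi -> 0 < dot a b -> a != b -> a - b \in Phi.
Proof.
move=> Ha Hb hab neq.
have A0 : 0 < dot a a by rewrite dot_gt0 // root_nz.
have B0 : 0 < dot b b by rewrite dot_gt0 // root_nz.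
case: hPhi => _ _ Hrefl Hcart Hred.
have [z1 hz1] := Hcart b a Hb Ha.
have [z2 hz2] := Hcart a b Ha Hb.
rewrite /cartan in hz1 hz2; rewrite dotC in hz2.
have z1p : 0 < z1 by rewrite -(ltr0z R) -hz1 divr_gt0 // mulr_gt0.
have z2p : 0 < z2 by rewrite -(ltr0z R) -hz2 divr_gt0 // mulr_gt0.
have lt4 : z1 * z2 < 4.
  suff : (z1%:~R * z2%:~R : R) < 4%:~R by rewrite -intrM ltr_int.
  rewrite -hz1 -hz2.
  have -> : ((4 : int)%:~R : R) = 4 by [].
  rewrite ltNge; apply/negP => h4.
  set A := dot a a in A0 h4 *; set B := dot b b in B0 h4 *; set C := dot a b in hab h4 *.
  have hAB : A * B <= C ^+ 2.
    have e : 2 * C / B * (2 * C / A) = 4 * C ^+ 2 / (A * B).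
      by field; apply/andP; split; rewrite gt_eqF.
    rewrite e ler_pdivlMr ?mulr_gt0 // in h4.
    lra.
  set t := C / B.
  have tp : 0 < t by rewrite divr_gt0.
  have ha : a = t *: b.
    apply/eqP; rewrite -subr_eq0; apply/eqP/dot_eq0.
    apply/le_anti; rewrite dot_ge0 andbT.
    rewrite !(dotBl, dotBr, dotZl, dotZr) (dotC b a) -/A -/B -/C.
    have -> : A - t * C - t * (C - t * B) = (A * B - C ^+ 2) / B.
      by rewrite /t; field; rewrite gt_eqF.
    by rewrite ler_pdivrMr // mul0r subr_le0.
  have := Hred b t Hb; rewrite -ha => /(_ Ha) [t1|t1].
    by move: neq; rewrite ha t1 scale1r eqxx.
  by move: tp; rewrite t1 ltr0N1.
have [e1|e2] : z1 = 1 \/ z2 = 1 by lia.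
  have := Hrefl b a Hb Ha; rewrite /refl /cartan.
  by rewrite hz1 e1 scale1r.
have := Hrefl a b Ha Hb; rewrite /refl /cartan dotC.
rewrite hz2 e2 scale1r => /negPhi.
by rewrite opprB.
Qed.

Lemma T1' a b : a \in Phi -> b \in Phi -> dot a b < 0 -> a != - b -> a + b \in Phi.
Proof.
move=> Ha Hb hab neq; rewrite -[b]opprK; apply: T1 => //.
  exact: negPhi.
by rewrite dotNr oppr_gt0.
Qed.

Lemma simple_dot (i j : 'I_k) : i != j -> dot Pi`_i Pi`_j <= 0.
Proof.
move=> ne; rewrite leNgt; apply/negP => pos.
have ne' : j != i by rewrite eq_sym.
have neq : Pi`_i != Pi`_j.
  apply/eqP => e; have := coord_a i i; rewrite e coord_a eqxx (negPf ne').
  by move/eqP; rewrite eq_sym oner_eq0.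
have hr := @T1 _ _ (a_in i) (a_in j) pos neq.
apply: (@mixed _ i j hr).
    by rewrite linearB /= !coord_a eqxx (negPf ne') subr0 ltr01.
by rewrite linearB /= !coord_a eqxx (negPf ne) sub0r oppr_lt0 ltr01.
Qed.


Lemma dot_vec_r u c : dot u (vec c) = \sum_(i < k) (c i)%:R * dot u Pi`_i.
Proof. by rewrite /vec dot_sumr; apply: eq_bigr => i _; exact: dotZr. Qed.

Lemma common_gg c1 c2 i0 j0 : vec c1 \in Phi -> vec c2 \in Phi ->
  (c2 i0 < c1 i0)%N -> (c1 j0 < c2 j0)%N -> dot (vec c1) (vec c2) <= 0.
Proof.
move=> h1 h2 hi hj; rewrite leNgt; apply/negP => pos.
have neq : vec c1 != vec c2.
  by apply/eqP => e; have := vec_inj e i0; lia.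
have hr := @T1 _ _ h1 h2 pos neq.
apply: (@mixed _ i0 j0 hr); rewrite linearB /= !coord_vec.
  by rewrite subr_gt0 ltr_nat.
by rewrite subr_lt0 ltr_nat.
Qed.

Lemma common_dd c1 c2 :
  dot (vec (fun i => c1 i - c2 i)%N) (vec (fun i => c2 i - c1 i)%N) <= 0.
Proof.
rewrite /vec dot_suml; apply: sumr_le0 => i _; rewrite dotZl dot_sumr.
case: (leqP (c1 i) (c2 i)) => h.
  have -> : (c1 i - c2 i)%N = 0%N by lia.
    by rewrite mul0r.
rewrite mulr_ge0_le0 ?ler0n //; apply: sumr_le0 => j _; rewrite dotZr.
case: (leqP (c2 j) (c1 j)) => hj.
  have -> : (c2 j - c1 j)%N = 0%N by lia.
    by rewrite mul0r.
rewrite mulr_ge0_le0 ?ler0n // simple_dot //.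
by apply/eqP => e; subst; lia.
Qed.

Lemma dec_min c1 c2 :
  vec c1 = vec (fun i => minn (c1 i) (c2 i)) + vec (fun i => c1 i - c2 i)%N.
Proof. by rewrite -vec_add; apply: vec_ext => i /=; lia. Qed.

Lemma dec_min2 c1 c2 :
  vec c2 = vec (fun i => minn (c1 i) (c2 i)) + vec (fun i => c2 i - c1 i)%N.
Proof. by rewrite -vec_add; apply: vec_ext => i /=; lia. Qed.

Lemma dec_max c1 c2 :
  vec (fun i => maxn (c1 i) (c2 i)) = vec (fun i => minn (c1 i) (c2 i)) +
     vec (fun i => c1 i - c2 i)%N + vec (fun i => c2 i - c1 i)%N.
Proof. by rewrite -!vec_add; apply: vec_ext => i /=; lia. Qed.

Lemma stuck_down c1 c2 i0 j0 : vec c1 \in Phi -> vec c2 \in Phi ->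
  (c2 i0 < c1 i0)%N -> (c1 j0 < c2 j0)%N ->
  (exists i, (c2 i < c1 i)%N /\ 0 < dot (vec c1) Pi`_i) \/
  (exists j, (c1 j < c2 j)%N /\ 0 < dot (vec c2) Pi`_j).
Proof.
move=> h1 h2 hi hj.
case: (boolP [exists i, (c2 i < c1 i)%N && (0 < dot (vec c1) Pi`_i)]).
  by move=> /existsP [i /andP [p q]]; left; exists i.
move=> H1.
case: (boolP [exists j, (c1 j < c2 j)%N && (0 < dot (vec c2) Pi`_j)]).
  by move=> /existsP [j /andP [p q]]; right; exists j.
move=> H2; exfalso.
have E1 : dot (vec c1) (vec (fun i => c1 i - c2 i)%N) <= 0.
  rewrite dot_vec_r; apply: sumr_le0 => i _.
  case: (leqP (c1 i) (c2 i)) => h.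
    have -> : (c1 i - c2 i)%N = 0%N by lia.
    by rewrite mul0r.
  rewrite mulr_ge0_le0 ?ler0n //.
  by move: H1; rewrite negb_exists => /forallP /(_ i); rewrite h /= -leNgt.
have E2 : dot (vec c2) (vec (fun i => c2 i - c1 i)%N) <= 0.
  rewrite dot_vec_r; apply: sumr_le0 => i _.
  case: (leqP (c2 i) (c1 i)) => h.
    have -> : (c2 i - c1 i)%N = 0%N by lia.
    by rewrite mul0r.
  rewrite mulr_ge0_le0 ?ler0n //.
  by move: H2; rewrite negb_exists => /forallP /(_ i); rewrite h /= -leNgt.
have G := @common_gg _ _ _ _ h1 h2 hi hj.
have D := common_dd c1 c2.
have : dot (vec (fun i => maxn (c1 i) (c2 i))) (vec (fun i => maxn (c1 i) (c2 i))) <= 0.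
  by rewrite dec_max id4 -dec_min -dec_min2; lra.
move=> le0.
have z : dot (vec (fun i => maxn (c1 i) (c2 i))) (vec (fun i => maxn (c1 i) (c2 i))) = 0.
  by apply/le_anti; rewrite le0 dot_ge0.
have := vec_eq0 (dot_eq0 z) i0; lia.
Qed.

Lemma stuck_up c1 c2 i0 j0 l : vec c1 \in Phi -> vec c2 \in Phi ->
  (c2 i0 < c1 i0)%N -> (c1 j0 < c2 j0)%N -> (0 < minn (c1 l) (c2 l))%N ->
  (exists j, (c1 j < c2 j)%N /\ dot (vec c1) Pi`_j < 0) \/
  (exists i, (c2 i < c1 i)%N /\ dot (vec c2) Pi`_i < 0).
Proof.
move=> h1 h2 hi hj hl.
case: (boolP [exists j, (c1 j < c2 j)%N && (dot (vec c1) Pi`_j < 0)]).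
  by move=> /existsP [i /andP [p q]]; left; exists i.
move=> H1.
case: (boolP [exists i, (c2 i < c1 i)%N && (dot (vec c2) Pi`_i < 0)]).
  by move=> /existsP [j /andP [p q]]; right; exists j.
move=> H2; exfalso.
have E1 : 0 <= dot (vec c1) (vec (fun i => c2 i - c1 i)%N).
  rewrite dot_vec_r; apply: sumr_ge0 => i _.
  case: (leqP (c2 i) (c1 i)) => h.
    have -> : (c2 i - c1 i)%N = 0%N by lia.
    by rewrite mul0r.
  rewrite mulr_ge0 ?ler0n //.
  by move: H1; rewrite negb_exists => /forallP /(_ i); rewrite h /= -leNgt.
have E2 : 0 <= dot (vec c2) (vec (fun i => c1 i - c2 i)%N).
  rewrite dot_vec_r; apply: sumr_ge0 => i _.
  case: (leqP (c1 i) (c2 i)) => h.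
    have -> : (c1 i - c2 i)%N = 0%N by lia.
    by rewrite mul0r.
  rewrite mulr_ge0 ?ler0n //.
  by move: H2; rewrite negb_exists => /forallP /(_ i); rewrite h /= -leNgt.
have G := @common_gg _ _ _ _ h1 h2 hi hj.
have D := common_dd c1 c2.
set nu := vec (fun i => minn (c1 i) (c2 i)).
have : dot nu nu <= 0.
  rewrite (id_nu nu (vec (fun i => c1 i - c2 i)%N) (vec (fun i => c2 i - c1 i)%N)).
  rewrite -dec_min -dec_min2 (dotC (vec (fun i => c1 i - c2 i)%N) (vec c2)); lra.
move=> le0.
have z : dot nu nu = 0 by apply/le_anti; rewrite le0 dot_ge0.
have := vec_eq0 (dot_eq0 z) l; lia.
Qed.


Definition meas (c1 c2 : 'I_k -> nat) := (\sum_(i < k) (c1 i - c2 i + (c2 i - c1 i)))%N.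

Lemma meas_sym c1 c2 : meas c1 c2 = meas c2 c1.
Proof. by apply: eq_bigr => i _; rewrite addnC. Qed.

Lemma meas0 c1 c2 : (meas c1 c2 <= 0)%N -> forall i, c1 i = c2 i.
Proof.
rewrite leqn0 /meas sum_nat_eq0 => /forallP H i.
by have := H i; rewrite implyTb => /eqP; lia.
Qed.

Lemma sum_ltn (F G : 'I_k -> nat) i : (forall j, F j <= G j)%N -> (F i < G i)%N ->
  (\sum_j F j < \sum_j G j)%N.
Proof.
move=> h hi; rewrite (bigD1 i) //= [X in (_ < X)%N](bigD1 i) //=.
have hs : (\sum_(j | j != i) F j <= \sum_(j | j != i) G j)%N.
  by apply: leq_sum => j _; exact: h.
by rewrite -addSn leq_add.
Qed.

Lemma step_down c1 c2 i : vec c1 \in Phi -> (c2 i < c1 i)%N ->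
  0 < dot (vec c1) Pi`_i -> (exists l, 0 < minn (c1 l) (c2 l))%N ->
  exists c1', [/\ vec c1' \in Phi, (meas c1' c2 < meas c1 c2)%N &
     forall j, minn (c1' j) (c2 j) = minn (c1 j) (c2 j)].
Proof.
move=> h1 hi pos [l hl].
pose c1' := fun j => (c1 j - (j == i))%N.
have e : vec c1 = vec c1' + Pi`_i.
  rewrite -vec_delta -vec_add; apply: vec_ext => j; rewrite /c1'.
  by case: eqP => [->|_] /=; lia.
exists c1'; split.
- have neq : vec c1 != Pi`_i.
    apply/eqP => e2; rewrite -vec_delta in e2.
    have := vec_inj e2 l; have := vec_inj e2 i; rewrite eqxx.
    case: (eqVneq l i) => [eli|nli]; first by subst; lia.
    by move=> _ /= hcl; lia.
  by have := @T1 _ _ h1 (a_in i) pos neq; rewrite e addrK.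
- apply: (@sum_ltn _ _ i).
    by move=> j; rewrite /c1'; case: eqP => [->|_] /=; lia.
  by rewrite /c1' eqxx /=; lia.
- by move=> j; rewrite /c1'; case: eqP => [->|_] /=; lia.
Qed.

Lemma step_up c1 c2 i : vec c1 \in Phi -> (c1 i < c2 i)%N ->
  dot (vec c1) Pi`_i < 0 ->
  exists c1', [/\ vec c1' \in Phi, (meas c1' c2 < meas c1 c2)%N,
     forall j, maxn (c1' j) (c2 j) = maxn (c1 j) (c2 j) &
     forall j, (minn (c1 j) (c2 j) <= minn (c1' j) (c2 j))%N].
Proof.
move=> h1 hi neg.
pose c1' := fun j => (c1 j + (j == i))%N.
have e : vec c1' = vec c1 + Pi`_i by rewrite -vec_delta -vec_add.
exists c1'; split.
- have neq : vec c1 != - Pi`_i.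
    apply/eqP => e2; have := congr1 (coord Pi i) e2.
    rewrite linearN /= coord_vec coord_a eqxx => h.
    have : (0 : R) <= (c1 i)%:R by rewrite ler0n.
    have h' : (c1 i)%:R = -1 :> R by rewrite h /= mulr1n.
    by rewrite h'; lra.
  by rewrite e; apply: T1' => //; exact: a_in.
- apply: (@sum_ltn _ _ i).
    by move=> j; rewrite /c1'; case: eqP => [->|_] /=; lia.
  by rewrite /c1' eqxx /=; lia.
- by move=> j; rewrite /c1'; case: eqP => [->|_] /=; lia.
- by move=> j; rewrite /c1'; case: eqP => [->|_] /=; lia.
Qed.

Lemma min_root N : forall c1 c2, (meas c1 c2 <= N)%N -> vec c1 \in Phi ->
  vec c2 \in Phi -> (exists l, 0 < minn (c1 l) (c2 l))%N ->
  vec (fun i => minn (c1 i) (c2 i)) \in Phi.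
Proof.
elim: N => [|N IH] c1 c2 hm h1 h2 hl.
  by rewrite (@vec_ext _ c1) // => i; rewrite (@meas0 _ _ hm i) minnn.
case: (boolP [forall i, c1 i <= c2 i]%N) => [/forallP A|].
  by rewrite (@vec_ext _ c1) // => i; apply/minn_idPl/A.
rewrite negb_forall => /existsP [i0]; rewrite -ltnNge => hi0.
case: (boolP [forall i, c2 i <= c1 i]%N) => [/forallP A|].
  by rewrite (@vec_ext _ c2) // => i; apply/minn_idPr/A.
rewrite negb_forall => /existsP [j0]; rewrite -ltnNge => hj0.
have [[i [ci pos]]|[j [cj pos]]] := @stuck_down _ _ _ _ h1 h2 hi0 hj0.
  have [c1' [h1' hm' he]] := @step_down _ _ _ h1 ci pos hl.
  rewrite (@vec_ext _ (fun i => minn (c1' i) (c2 i))) => [|x]; last by rewrite he.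
  apply: IH => //; first by lia.
  by case: hl => l hl; exists l; rewrite he.
have hl' : (exists l, 0 < minn (c2 l) (c1 l))%N.
  by case: hl => l hl; exists l; rewrite minnC.
have [c2' [h2' hm' he]] := @step_down _ _ _ h2 cj pos hl'.
rewrite (@vec_ext _ (fun i => minn (c1 i) (c2' i))) => [|x]; last by rewrite [RHS]minnC he minnC.
apply: IH => //; first by rewrite meas_sym; rewrite meas_sym in hm; lia.
by case: hl' => l hl'; exists l; rewrite minnC he.
Qed.

Lemma max_root N : forall c1 c2, (meas c1 c2 <= N)%N -> vec c1 \in Phi ->
  vec c2 \in Phi -> (exists l, 0 < minn (c1 l) (c2 l))%N ->
  vec (fun i => maxn (c1 i) (c2 i)) \in Phi.
Proof.
elim: N => [|N IH] c1 c2 hm h1 h2 hl.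
  by rewrite (@vec_ext _ c1) // => i; rewrite (@meas0 _ _ hm i) maxnn.
case: (boolP [forall i, c1 i <= c2 i]%N) => [/forallP A|].
  by rewrite (@vec_ext _ c2) // => i; apply/maxn_idPr/A.
rewrite negb_forall => /existsP [i0]; rewrite -ltnNge => hi0.
case: (boolP [forall i, c2 i <= c1 i]%N) => [/forallP A|].
  by rewrite (@vec_ext _ c1) // => i; apply/maxn_idPl/A.
rewrite negb_forall => /existsP [j0]; rewrite -ltnNge => hj0.
have [l hl0] := hl.
have [[j [cj neg]]|[i [ci neg]]] := @stuck_up _ _ _ _ _ h1 h2 hi0 hj0 hl0.
  have [c1' [h1' hm' he hmin]] := @step_up _ _ _ h1 cj neg.
  rewrite (@vec_ext _ (fun i => maxn (c1' i) (c2 i))) => [|x]; last by rewrite he.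
  apply: IH => //; first by lia.
  by exists l; have := hmin l; lia.
have [c2' [h2' hm' he hmin]] := @step_up _ _ _ h2 ci neg.
rewrite (@vec_ext _ (fun i => maxn (c1 i) (c2' i))) => [|x]; last by rewrite [RHS]maxnC he maxnC.
apply: IH => //; first by rewrite meas_sym; rewrite meas_sym in hm; lia.
by exists l; have := hmin l; lia.
Qed.


Lemma vec_zero : vec (fun _ => 0%N) = 0.
Proof. by rewrite /vec big1 // => i _; rewrite scale0r. Qed.

Lemma pos_vec b : pos_root Phi Pi b -> exists c, b = vec c /\ vec c \in Phi.
Proof.
rewrite /pos_root /rpreceq; case=> hb [c e]; rewrite subr0 in e.
by exists c; split; [exact: e | rewrite /vec -e].
Qed.

Lemma vec_pos c : vec c \in Phi -> pos_root Phi Pi (vec c).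
Proof. by move=> h; split => //; exists c; rewrite subr0. Qed.

Lemma le_vec c d : rpreceq Pi (vec c) (vec d) <-> forall i, (c i <= d i)%N.
Proof.
split.
  case=> e he i; change (vec d - vec c = vec e) in he.
  have : vec d = vec (fun i => c i + e i)%N by rewrite vec_add -he addrC subrK.
  by move/vec_inj => /(_ i) ->; rewrite leq_addr.
move=> h; exists (fun i => d i - c i)%N.
change (vec d - vec c = vec (fun i => d i - c i)%N); apply/eqP.
rewrite subr_eq -vec_add; apply/eqP/vec_ext => i /=; have := h i; lia.
Qed.

Lemma antisym u v : rpreceq Pi u v -> rpreceq Pi v u -> u = v.
Proof.
case=> c hc [d hd]; change (v - u = vec c) in hc; change (u - v = vec d) in hd.
have : vec (fun i => c i + d i)%N = 0.
  by rewrite vec_add -hc -hd addrA subrK subrr.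
move/vec_eq0 => H.
have : vec c = 0 by rewrite -vec_zero; apply: vec_ext => i; have := H i; lia.
by rewrite -hc => /subr0_eq.
Qed.

Lemma pos_l cg : vec cg \in Phi -> exists l, (0 < cg l)%N.
Proof.
move=> h; case: (boolP [exists l, 0 < cg l]%N) => [/existsP [l hl]|H]; first by exists l.
exfalso; have := @root_nz _ h; rewrite -vec_zero (@vec_ext _ (fun _ => 0%N)) ?eqxx //.
move=> i; move: H; rewrite negb_exists => /forallP /(_ i); lia.
Qed.

Arguments pos_l {cg}.

Lemma meet_pos c1 c2 : vec c1 \in Phi -> vec c2 \in Phi ->
  (exists l, 0 < minn (c1 l) (c2 l))%N ->
  is_meet (pos_root Phi Pi) (rpreceq Pi) (vec c1) (vec c2)
          (vec (fun i => minn (c1 i) (c2 i))).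
Proof.
move=> h1 h2 hl; split.
- exact: vec_pos (@min_root _ c1 c2 (leqnn _) h1 h2 hl).
- by apply/le_vec => i; rewrite geq_minl.
- by apply/le_vec => i; rewrite geq_minr.
- move=> z /pos_vec [c [-> hc]] /le_vec z1 /le_vec z2.
  by apply/le_vec => i; rewrite leq_min z1 z2.
Qed.

Arguments meet_pos {c1 c2}.

Lemma meet_S cg c1 c2 : vec cg \in Phi -> vec c1 \in Phi -> vec c2 \in Phi ->
  (forall i, cg i <= c1 i)%N -> (forall i, cg i <= c2 i)%N ->
  is_meet (fun nu => pos_root Phi Pi nu /\ rpreceq Pi (vec cg) nu) (rpreceq Pi)
     (vec c1) (vec c2) (vec (fun i => minn (c1 i) (c2 i))).
Proof.
move=> hg h1 h2 g1 g2.
have hl : (exists l, 0 < minn (c1 l) (c2 l))%N.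
  by have [l hl] := pos_l hg; exists l; have := g1 l; have := g2 l; lia.
have [P1 P2 P3 P4] := meet_pos h1 h2 hl.
split => //.
- by split => //; apply/le_vec => i; rewrite leq_min g1 g2.
- by move=> z [pz _]; apply: P4.
Qed.

Lemma join_S cg c1 c2 : vec cg \in Phi -> vec c1 \in Phi -> vec c2 \in Phi ->
  (forall i, cg i <= c1 i)%N -> (forall i, cg i <= c2 i)%N ->
  is_join (fun nu => pos_root Phi Pi nu /\ rpreceq Pi (vec cg) nu) (rpreceq Pi)
     (vec c1) (vec c2) (vec (fun i => maxn (c1 i) (c2 i))).
Proof.
move=> hg h1 h2 g1 g2.
have hl : (exists l, 0 < minn (c1 l) (c2 l))%N.
  by have [l hl] := pos_l hg; exists l; have := g1 l; have := g2 l; lia.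
split.
- split; first exact: vec_pos (@max_root _ c1 c2 (leqnn _) h1 h2 hl).
  by apply/le_vec => i; have := g1 i; lia.
- by apply/le_vec => i; rewrite leq_maxl.
- by apply/le_vec => i; rewrite leq_maxr.
- move=> z [/pos_vec [c [-> hc]] _] /le_vec z1 /le_vec z2.
  by apply/le_vec => i; rewrite geq_max z1 z2.
Qed.



Arguments meet_S {cg c1 c2}.
Arguments join_S {cg c1 c2}.

Lemma main_thm :
  (forall gamma, pos_root Phi Pi gamma ->
     modular_lattice (fun nu => pos_root Phi Pi nu /\ rpreceq Pi gamma nu)
                     (rpreceq Pi)) /\
  (forall gamma1 gamma2, pos_root Phi Pi gamma1 -> pos_root Phi Pi gamma2 ->
     ((exists nu, is_meet (pos_root Phi Pi) (rpreceq Pi) gamma1 gamma2 nu) <->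
        rsupp Pi gamma1 :&: rsupp Pi gamma2 != set0) /\
     (rsupp Pi gamma1 :&: rsupp Pi gamma2 != set0 ->
        is_meet (pos_root Phi Pi) (rpreceq Pi) gamma1 gamma2
          (\sum_(i < k) Num.min (rcoef Pi gamma1 i) (rcoef Pi gamma2 i) *: Pi`_i))).
Proof.
split.
  move=> gamma /pos_vec [cg [-> hg]]; split.
    move=> x y [/pos_vec [cx [-> hx]] /le_vec gx] [/pos_vec [cy [-> hy]] /le_vec gy].
    by split; eexists; [apply: meet_S | apply: join_S].
  move=> x y z m j1 j2 m2 [/pos_vec [cx [-> hx]] /le_vec gx]
    [/pos_vec [cy [-> hy]] /le_vec gy] [/pos_vec [cz [-> hz]] /le_vec gz] /le_vec xz
    Hm Hj1 Hj2 Hm2.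
  have hmin : vec (fun i => minn (cy i) (cz i)) \in Phi.
    apply: (@min_root _ cy cz (leqnn _) hy hz).
    by have [l hl] := pos_l hg; exists l; have := gy l; have := gz l; lia.
  have hmax : vec (fun i => maxn (cx i) (cy i)) \in Phi.
    apply: (@max_root _ cx cy (leqnn _) hx hy).
    by have [l hl] := pos_l hg; exists l; have := gx l; have := gy l; lia.
  have em := meet_uniq antisym Hm (meet_S hg hy hz gy gz); subst m.
  have gmin : forall i, (cg i <= minn (cy i) (cz i))%N.
    by move=> i; have := gy i; have := gz i; lia.
  have gmax : forall i, (cg i <= maxn (cx i) (cy i))%N.
    by move=> i; have := gx i; have := gy i; lia.
  have ej1 := join_uniq antisym Hj1 (join_S hg hx hmin gx gmin); subst j1.
  have ej2 := join_uniq antisym Hj2 (join_S hg hx hy gx gy); subst j2.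
  have em2 := meet_uniq antisym Hm2 (meet_S hg hmax hz gmax gz); subst m2.
  by apply: vec_ext => i; have := xz i; lia.
move=> g1 g2 /pos_vec [c1 [-> h1]] /pos_vec [c2 [-> h2]].
have supp : (rsupp Pi (vec c1) :&: rsupp Pi (vec c2) != set0) <->
    (exists l, 0 < minn (c1 l) (c2 l))%N.
  split.
    move/set0Pn => [l]; rewrite !inE /rcoef !coord_vec !pnatr_eq0 => /andP [a b].
    by exists l; lia.
  case=> l hl; apply/set0Pn; exists l; rewrite !inE /rcoef !coord_vec !pnatr_eq0.
  by apply/andP; split; apply/eqP; lia.
have eqsum : \sum_(i < k) Num.min (rcoef Pi (vec c1) i) (rcoef Pi (vec c2) i) *: Pi`_i
    = vec (fun i => minn (c1 i) (c2 i)).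
  by apply: eq_bigr => i _; rewrite /rcoef !coord_vec -natr_min minEnat.
split; [split|].
- case=> nu [/pos_vec [cn [-> hn]] /le_vec l1 /le_vec l2 _]; apply/supp.
  by have [l hl] := pos_l hn; exists l; have := l1 l; have := l2 l; lia.
- by move/supp => hl; exists (vec (fun i => minn (c1 i) (c2 i))); exact: meet_pos.
- by move/supp => hl; rewrite eqsum; exact: meet_pos.
Qed.

End Roots.

Theorem theorem2p5 (R : realFieldType) (n k : nat) (Phi : seq 'rV[R]_n)
    (Pi : k.-tuple 'rV[R]_n)
    (hPhi : irreducible_reduced_root_system Phi) (hPi : is_base Phi Pi) :
  (forall gamma, pos_root Phi Pi gamma ->
     modular_lattice (fun nu => pos_root Phi Pi nu /\ rpreceq Pi gamma nu)
                     (rpreceq Pi)) /\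
  (forall gamma1 gamma2, pos_root Phi Pi gamma1 -> pos_root Phi Pi gamma2 ->
     ((exists nu, is_meet (pos_root Phi Pi) (rpreceq Pi) gamma1 gamma2 nu) <->
        rsupp Pi gamma1 :&: rsupp Pi gamma2 != set0) /\
     (rsupp Pi gamma1 :&: rsupp Pi gamma2 != set0 ->
        is_meet (pos_root Phi Pi) (rpreceq Pi) gamma1 gamma2
          (\sum_(i < k) Num.min (rcoef Pi gamma1 i) (rcoef Pi gamma2 i) *: Pi`_i))).
Proof. exact: (@main_thm R n k Phi Pi (proj1 hPhi) hPi). Qed.
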